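(* Consider $N$ user devices indexed by $n\in\{1,\dots,N\}$ with positive weights $\rho_1,\dots,\rho_N>0$. For each $n$, let the dual confidence thresholds satisfy $0<\alpha_n^l<\alpha_n^u<1$, and let $\bar{\mathcal{U}}_n(\alpha_n^l,\alpha_n^u)>0$ be the limiting true positive rate of the dual-threshold early-exit classifier at device $n$ (defined in the context). Then the objective function $$F(\alpha^l,\alpha^u)=\sum_{n=1}^{N}\rho_n \ln\big(\bar{\mathcal{U}}_n(\alpha_n^l,\alpha_n^u)\big)$$ is monotonically decreasing with respect to the dual threshold variables $\alpha^l=(\alpha_1^l,\dots,\alpha_N^l)$ and $\alpha^u=(\alpha_1^u,\dots,\alpha_N^u)$, i.e. increasing any single threshold $\alpha_n^l$ or $\alpha_n^u$ (while keeping $\alpha_n^l<\alpha_n^u$ within $(0,1)$ and all other thresholds fixed) does not increase $F$.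
   Context: Setting. Device $n$ observes a sequence $\Phi_n$ of events $I_k$. Each event $I_k$ has a ground-truth label $y^{(k)}\in\{0,1\}$ ($1$ = critical, $0$ = normal) and, from a fixed $L$-layer classifier (independent of the thresholds), a sequence of confidence scores $C_1^{(k)},\dots,C_L^{(k)}\in[0,1]$. Given thresholds $(\alpha_n^l,\alpha_n^u)$, the predicted label $\hat y^{(k)}$ is: $\hat y^{(k)}=0$ if there is $q\le L$ with $C_q^{(k)}\le\alpha_n^l$ and $\alpha_n^l<C_t^{(k)}<\alpha_n^u$ for all $t<q$; $\hat y^{(k)}=1$ if there is $q\le L$ with $C_q^{(k)}\ge\alpha_n^u$ and $\alpha_n^l<C_t^{(k)}<\alpha_n^u$ for all $t<q$; and $\hat y^{(k)}=0$ if $\alpha_n^l<C_t^{(k)}<\alpha_n^u$ for all $t\le L$ (i.e. the first layer whose score leaves the open interval $(\alpha_n^l,\alpha_n^u)$ decides the label, and if none does the event is labeled normal). Let $\Phi_n^{P}=\{I_k\in\Phi_n: y^{(k)}=1\}$ (assumed nonempty) and $\hat\Phi_n^{TP}=\{I_k\in\Phi_n: y^{(k)}=1,\ \hat y^{(k)}=1\}$. The empirical utility (true positive rate) is $\mathcal{U}_n(\alpha_n^l,\alpha_n^u)=|\hat\Phi_n^{TP}|/|\Phi_n^{P}|$, and $\bar{\mathcal{U}}_n(\alpha_n^l,\alpha_n^u)=\lim_{|\Phi_n|\to\infty}\mathcal{U}_n(\alpha_n^l,\alpha_n^u)$ (assumed to exist). Standing assumption: $\bar{\mathcal{U}}_n>0$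 for all $n$, so the logarithm is defined. ''Monotonically decreasing'' is in the non-strict sense (non-increasing). *)

(* Defs.v *)
From Stdlib Require Import Reals List Classical ClassicalDescription.
Open Scope R_scope.

(* An event I_k: ground-truth label y (true = critical, false = normal) and
   confidence scores C_1 .. C_L given by [conf q] for 1 <= q <= L. *)
Record event := mkEvent { label : bool ; conf : nat -> R }.

Definition exits_normal (L : nat) (al au : R) (e : event) : Prop :=
  exists q, (1 <= q <= L)%nat /\ conf e q <= al /\
    forall t, (1 <= t < q)%nat -> al < conf e t < au.

Definition exits_critical (L : nat) (al au : R) (e : event) : Prop :=
  exists q, (1 <= q <= L)%nat /\ au <= conf e q /\
    forall t, (1 <= t < q)%nat -> al < conf e t < au.

Definition no_exit (L : nat) (al au : R) (e : event) : Prop :=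
  forall t, (1 <= t <= L)%nat -> al < conf e t < au.

(* Predicted label: 1 exactly in the critical-exit case, 0 otherwise
   (the other two cases of the paper). *)
Definition predicted (L : nat) (al au : R) (e : event) : bool :=
  if excluded_middle_informative (exits_critical L al au e) then true else false.

Fixpoint count_first (K : nat) (P : nat -> bool) : nat :=
  match K with
  | O => O
  | S K' => (count_first K' P + (if P K' then 1 else 0))%nat
  end.

Definition utility (L : nat) (Phi : nat -> event) (al au : R) (K : nat) : R :=
  INR (count_first K (fun k => andb (label (Phi k)) (predicted L al au (Phi k))))
  / INR (count_first K (fun k => label (Phi k))).

Definition sumR (N : nat) (f : nat -> R) : R :=
  fold_right Rplus 0 (map f (seq 0 N)).

Definition objective (N : nat) (rho : nat -> R) (Ubar : nat -> R -> R -> R)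
  (al au : nat -> R) : R :=
  sumR N (fun n => rho n * ln (Ubar n (al n) (au n))).

Definition admissible (N : nat) (al au : nat -> R) : Prop :=
  forall n, (n < N)%nat -> 0 < al n /\ al n < au n /\ au n < 1.

(* Main.v *)
Require Import Defs.
From Stdlib Require Import Reals Lia Lra List ClassicalDescription.
Open Scope R_scope.

Lemma count_mono K (P Q : nat -> bool) :
  (forall k, P k = true -> Q k = true) -> (count_first K P <= count_first K Q)%nat.
Proof.
  intro H; induction K as [|K IH]; simpl; [lia|].
  destruct (P K) eqn:E; [rewrite (H K E)|destruct (Q K)]; lia.
Qed.

Lemma util_mono L Phi al au al' au' :
  (forall e, exits_critical L al' au' e -> exits_critical L al au e) ->
  forall K, utility L Phi al' au' K <= utility L Phi al au K.
Proof.
  intros H K; unfold utility, Rdiv.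
  apply Rmult_le_compat_r.
  - destruct (Rle_lt_or_eq_dec 0 (INR (count_first K (fun k => label (Phi k)))) (pos_INR _)) as [h|h].
    + left; apply Rinv_0_lt_compat; exact h.
    + rewrite <- h, Rinv_0; lra.
  - apply le_INR, count_mono. intro k.
    unfold predicted.
    destruct (excluded_middle_informative (exits_critical L al' au' (Phi k))) as [c|c];
    destruct (excluded_middle_informative (exits_critical L al au (Phi k))) as [c'|c'];
    try (destruct (label (Phi k)); simpl; congruence).
    exfalso; apply c'; apply H; exact c.
Qed.

Lemma crit_al L al al' au e : al <= al' ->
  exits_critical L al' au e -> exits_critical L al au e.
Proof.
  unfold exits_critical; intros h [q [Hq [Hc Ht]]]; exists q; split; [auto|split; [auto|]].
  intros t Ht'; specialize (Ht t Ht'); lra.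
Qed.

Lemma aux (al au au' : R) (e : event) : forall q,
  (forall t, (1 <= t < q)%nat -> al < conf e t < au') ->
  (forall t, (1 <= t < q)%nat -> conf e t < au) \/
  exists q', (1 <= q' < q)%nat /\ au <= conf e q' /\
    forall t, (1 <= t < q')%nat -> al < conf e t < au.
Proof.
  induction q as [|q IH]; intro H.
  - left; intros; lia.
  - destruct IH as [A|[q' [B C]]].
    + intros t Ht; apply H; lia.
    + destruct (Nat.eq_dec q 0) as [z|nz].
      * left; intros t Ht; lia.
      * destruct (Rlt_le_dec (conf e q) au) as [l|l].
        -- left; intros t Ht. destruct (Nat.eq_dec t q); [subst; auto|apply A; lia].
        -- right; exists q; split; [lia|split; [exact l|]].
           intros t Ht; split; [apply (H t); lia| apply A; lia].
    + right; exists q'; split; [lia|exact C].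
Qed.

Lemma crit_au L al au au' e : au <= au' ->
  exits_critical L al au' e -> exits_critical L al au e.
Proof.
  unfold exits_critical; intros h [q [Hq [Hc Ht]]].
  destruct (aux al au au' e q Ht) as [A|[q' [B [C D]]]].
  - exists q; split; [lia|split; [lra|]].
    intros t Ht'; split; [apply (Ht t Ht')|apply A; auto].
  - exists q'; split; [lia|split; [exact C|exact D]].
Qed.

Lemma sumR_le_gen N f g : forall s,
  (forall n, (s <= n < s + N)%nat -> f n <= g n) ->
  fold_right Rplus 0 (map f (seq s N)) <= fold_right Rplus 0 (map g (seq s N)).
Proof.
  induction N as [|N IH]; intros s H; simpl; [lra|].
  apply Rplus_le_compat; [apply H; lia|apply IH; intros; apply H; lia].
Qed.

Lemma sumR_le N f g : (forall n, (n < N)%nat -> f n <= g n) -> sumR N f <= sumR N g.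
Proof.
  intro H; apply sumR_le_gen; intros; apply H; lia.
Qed.

Lemma ln_le' x y : 0 < x -> x <= y -> ln x <= ln y.
Proof.
  intros hx h; destruct (Rle_lt_or_eq_dec _ _ h) as [l|e].
  - left; apply ln_increasing; auto.
  - subst; lra.
Qed.

Theorem theorem1
  (N L : nat) (rho : nat -> R) (Phi : nat -> nat -> event)
  (Ubar : nat -> R -> R -> R)
  (Hrho : forall n, (n < N)%nat -> 0 < rho n)
  (Hconf : forall n k q, (1 <= q <= L)%nat ->
      0 <= conf (Phi n k) q <= 1)
  (Hpos_exists : forall n, (n < N)%nat -> exists k, label (Phi n k) = true)
  (Hlim : forall n al au, (n < N)%nat -> 0 < al < au -> au < 1 ->
      Un_cv (utility L (Phi n) al au) (Ubar n al au))
  (Hgt0 : forall n al au, (n < N)%nat -> 0 < al < au -> au < 1 ->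
      0 < Ubar n al au) :
  (forall (al au al' : nat -> R) (m : nat),
      admissible N al au -> admissible N al' au ->
      (forall n, n <> m -> al' n = al n) -> al m <= al' m ->
      objective N rho Ubar al' au <= objective N rho Ubar al au)
  /\
  (forall (al au au' : nat -> R) (m : nat),
      admissible N al au -> admissible N al au' ->
      (forall n, n <> m -> au' n = au n) -> au m <= au' m ->
      objective N rho Ubar al au' <= objective N rho Ubar al au).
Proof.
  split.
  - intros al au al' m A A' Heq Hle. unfold objective. apply sumR_le.
    intros n Hn. destruct (A n Hn) as (a1&a2&a3). destruct (A' n Hn) as (b1&b2&b3).
    apply Rmult_le_compat_l; [left; apply Hrho; auto|].
    apply ln_le'; [apply Hgt0; auto; lra|].
    destruct (Nat.eq_dec n m) as [->|ne]; [|rewrite (Heq n ne); lra].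
    apply (Rle_cv_lim (Un := utility L (Phi m) (al' m) (au m)) (Vn := utility L (Phi m) (al m) (au m))).
    + apply util_mono. intro e; apply crit_al; auto.
    + apply Hlim; auto; lra.
    + apply Hlim; auto; lra.
  - intros al au au' m A A' Heq Hle. unfold objective. apply sumR_le.
    intros n Hn. destruct (A n Hn) as (a1&a2&a3). destruct (A' n Hn) as (b1&b2&b3).
    apply Rmult_le_compat_l; [left; apply Hrho; auto|].
    apply ln_le'; [apply Hgt0; auto; lra|].
    destruct (Nat.eq_dec n m) as [->|ne]; [|rewrite (Heq n ne); lra].
    apply (Rle_cv_lim (Un := utility L (Phi m) (al m) (au' m)) (Vn := utility L (Phi m) (al m) (au m))).
    + apply util_mono. intro e; apply crit_au; auto.
    + apply Hlim; auto; lra.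
    + apply Hlim; auto; lra.
Qed.
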